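(* Let $(x_n)$ be a bounded sequence and $(y_n)$ a weakly Cauchy sequence in a Banach space $X$. Then for every $\varepsilon\in(0,1)$ there is a subsequence $(n_k)$ with the following properties: - both $(x_{n_k})_k$ and $(x_{n_k}+y_{n_k})_k$ are $c_J$-stable; - $(1-\varepsilon)\,\tilde c_J(x_n)\le c_J(x_{n_k})\le\tilde c_J(x_n)$; - $c_J(x_{n_k}+y_{n_k})=c_J(x_{n_k})$.
   Context: For a bounded sequence $(x_n)$ in a Banach space, define $c_m=\inf\{\|\sum_{n\ge m}\alpha_n x_n\|: \sum_{n\ge m}|\alpha_n|=1\}$ and $c_J(x_n)=\sup_m c_m$. Passing to a subsequence does not decrease $c_J$. Define $\tilde c_J(x_n)=\sup\{c_J(x_{n_k}): (x_{n_k}) \text{ a subsequence of } (x_n)\}$. A sequence is called $c_J$-stable if $c_J(x_n)=\tilde c_J(x_n)$. *)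

(* Defs.v *)
From Stdlib Require Import Reals Lra.
Open Scope R_scope.

Set Implicit Arguments.

Record BanachSpace := {
  carrier :> Type;
  vadd : carrier -> carrier -> carrier;
  vscal : R -> carrier -> carrier;
  vzero : carrier;
  vopp : carrier -> carrier;
  vnorm : carrier -> R;
  vadd_assoc : forall x y z, vadd x (vadd y z) = vadd (vadd x y) z;
  vadd_comm : forall x y, vadd x y = vadd y x;
  vadd_0 : forall x, vadd x vzero = x;
  vadd_opp : forall x, vadd x (vopp x) = vzero;
  vscal_1 : forall x, vscal 1 x = x;
  vscal_assoc : forall a b x, vscal a (vscal b x) = vscal (a * b) x;
  vscal_distr_v : forall a x y, vscal a (vadd x y) = vadd (vscal a x) (vscal a y);
  vscal_distr_s : forall a b x, vscal (a + b) x = vadd (vscal a x) (vscal b x);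
  vnorm_nonneg : forall x, 0 <= vnorm x;
  vnorm_eq0 : forall x, vnorm x = 0 -> x = vzero;
  vnorm_scal : forall a x, vnorm (vscal a x) = Rabs a * vnorm x;
  vnorm_triangle : forall x y, vnorm (vadd x y) <= vnorm x + vnorm y;
  complete : forall u : nat -> carrier,
    (forall e, 0 < e -> exists N, forall n m, (N <= n)%nat -> (N <= m)%nat ->
        vnorm (vadd (u n) (vopp (u m))) < e) ->
    exists l, forall e, 0 < e -> exists N, forall n, (N <= n)%nat ->
        vnorm (vadd (u n) (vopp l)) < e
}.

Section Defs.
Context {X : BanachSpace}.

Definition bounded_linear_functional (f : X -> R) : Prop :=
  (forall x y, f (vadd X x y) = f x + f y) /\
  (forall a x, f (vscal X a x) = a * f x) /\
  (exists C, forall x, Rabs (f x) <= C * vnorm X x).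

Definition bounded_seq (x : nat -> X) : Prop :=
  exists M, forall n, vnorm X (x n) <= M.

Definition weakly_Cauchy (y : nat -> X) : Prop :=
  forall f, bounded_linear_functional f -> Cauchy_crit (fun n => f (y n)).

Definition seq_add (x y : nat -> X) : nat -> X := fun n => vadd X (x n) (y n).

Fixpoint vsum (a : nat -> R) (x : nat -> X) (m k : nat) : X :=
  match k with
  | O => vscal X (a m) (x m)
  | S k' => vadd X (vsum a x m k') (vscal X (a (m + S k')%nat) (x (m + S k')%nat))
  end.

(** The set { || sum_{n>=m} a_n x_n || : sum_{n>=m} |a_n| = 1 }
    (finitely supported coefficient sequences starting at m). *)
Definition cm_set (x : nat -> X) (m : nat) (r : R) : Prop :=
  exists (a : nat -> R) (k : nat),
    sum_f m (m + k) (fun n => Rabs (a n)) = 1 /\ r = vnorm X (vsum a x m k).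

Definition is_glb (E : R -> Prop) (g : R) : Prop :=
  (forall r, E r -> g <= r) /\ (forall b, (forall r, E r -> b <= r) -> b <= g).

Definition is_cm (x : nat -> X) (m : nat) (r : R) : Prop := is_glb (cm_set x m) r.

Definition is_cJ (x : nat -> X) (r : R) : Prop :=
  is_lub (fun c => exists m, is_cm x m c) r.

Definition strictly_increasing (phi : nat -> nat) : Prop :=
  forall n, (phi n < phi (S n))%nat.

Definition is_tilde_cJ (x : nat -> X) (r : R) : Prop :=
  is_lub (fun c => exists phi, strictly_increasing phi /\ is_cJ (fun k => x (phi k)) c) r.

Definition cJ_stable (x : nat -> X) : Prop :=
  exists r, is_cJ x r /\ is_tilde_cJ x r.

End Defs.

(* Main.v *)
Require Import Defs.
From Stdlib Require Import Bool Reals Lra Lia Classical ClassicalEpsilon FunctionalExtensionality PropExtensionality ProofIrrelevance.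
Open Scope R_scope.

Section GSum.
Variable T : Type.
Variable add : T -> T -> T.
Variable zero : T.
Hypothesis addA : forall x y z, add x (add y z) = add (add x y) z.
Hypothesis addC : forall x y, add x y = add y x.
Hypothesis add0 : forall x, add x zero = x.

Fixpoint gs (u : nat -> T) (K : nat) : T :=
  match K with O => zero | S K' => add (gs u K') (u K') end.

Lemma add0l x : add zero x = x.
Proof. rewrite addC; apply add0. Qed.

Lemma gs_ext u v K : (forall i, (i < K)%nat -> u i = v i) -> gs u K = gs v K.
Proof.
  induction K; simpl; intros H; auto.
  rewrite IHK by (intros; apply H; lia). rewrite H by lia. reflexivity.
Qed.

Lemma gs_zero u K : (forall i, (i < K)%nat -> u i = zero) -> gs u K = zero.
Proof.
  induction K; simpl; intros H; auto.
  rewrite IHK by (intros; apply H; lia). rewrite H by lia. apply add0.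
Qed.

Lemma gs_split u m L : gs u (m + L) = add (gs u m) (gs (fun i => u (m + i)%nat) L).
Proof.
  induction L; simpl.
  - rewrite Nat.add_0_r, add0; auto.
  - rewrite Nat.add_succ_r; simpl. rewrite IHL, addA. reflexivity.
Qed.

Lemma gs_extend u K K' : (K <= K')%nat -> (forall i, (K <= i < K')%nat -> u i = zero) ->
  gs u K' = gs u K.
Proof.
  intros HK H. replace K' with (K + (K' - K))%nat by lia.
  rewrite gs_split. rewrite (gs_zero (fun i => u (K + i)%nat)); [apply add0|].
  intros; apply H; lia.
Qed.

Lemma gs_shift u m L :
  gs (fun i => u (i + m)%nat) L = gs (fun j => if (m <=? j)%nat then u j else zero) (m + L).
Proof.
  rewrite gs_split. rewrite (gs_zero _ m).
  - rewrite add0l. apply gs_ext. intros i _.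
    replace (m <=? m + i)%nat with true by (symmetry; apply Nat.leb_le; lia).
    f_equal; lia.
  - intros i Hi. replace (m <=? i)%nat with false by (symmetry; apply Nat.leb_gt; lia). auto.
Qed.

Lemma gs_add u v K : gs (fun i => add (u i) (v i)) K = add (gs u K) (gs v K).
Proof.
  induction K; simpl. now rewrite add0.
  rewrite IHK. rewrite <- !addA. f_equal. rewrite (addC (u K) (add _ _)), <- addA. f_equal. apply addC.
Qed.

Lemma gs_swap (u : nat -> nat -> T) K L :
  gs (fun i => gs (fun j => u i j) L) K = gs (fun j => gs (fun i => u i j) K) L.
Proof.
  induction K; simpl.
  - symmetry; apply gs_zero; auto.
  - rewrite IHK. rewrite <- gs_add. reflexivity.
Qed.

Lemma gs_single u K i0 : (i0 < K)%nat -> (forall i, (i < K)%nat -> i <> i0 -> u i = zero) ->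
  gs u K = u i0.
Proof.
  intros Hi H. rewrite (gs_extend u (S i0) K) by (try lia; intros; apply H; lia).
  simpl. rewrite gs_zero by (intros; apply H; lia). apply add0l.
Qed.

End GSum.

Section GHom.
Variables (T T' : Type) (add : T -> T -> T) (zero : T) (add' : T' -> T' -> T') (zero' : T').
Variable h : T -> T'.
Hypothesis hadd : forall x y, h (add x y) = add' (h x) (h y).
Hypothesis h0 : h zero = zero'.
Lemma gs_hom u K : h (gs T add zero u K) = gs T' add' zero' (fun i => h (u i)) K.
Proof. induction K; simpl; auto. rewrite hadd, IHK; auto. Qed.
End GHom.

Definition RS := gs R Rplus 0.

Lemma RS_ext u v K : (forall i, (i < K)%nat -> u i = v i) -> RS u K = RS v K.
Proof. apply gs_ext. Qed.
Lemma RS_zero u K : (forall i, (i < K)%nat -> u i = 0) -> RS u K = 0.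
Proof. apply gs_zero. intros; lra. Qed.
Lemma RS_extend u K K' : (K <= K')%nat -> (forall i, (K <= i < K')%nat -> u i = 0) ->
  RS u K' = RS u K.
Proof. apply gs_extend; intros; lra. Qed.
Lemma RS_add u v K : RS (fun i => u i + v i) K = RS u K + RS v K.
Proof. apply gs_add; intros; lra. Qed.
Lemma RS_swap (u : nat -> nat -> R) K L :
  RS (fun i => RS (fun j => u i j) L) K = RS (fun j => RS (fun i => u i j) K) L.
Proof. apply gs_swap; intros; lra. Qed.
Lemma RS_single u K i0 : (i0 < K)%nat -> (forall i, (i < K)%nat -> i <> i0 -> u i = 0) ->
  RS u K = u i0.
Proof. apply gs_single; intros; lra. Qed.
Lemma RS_scal c u K : c * RS u K = RS (fun i => c * u i) K.
Proof. unfold RS. apply (gs_hom _ _ Rplus 0 Rplus 0 (fun x => c * x)); intros; lra. Qed.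
Lemma RS_le u v K : (forall i, (i < K)%nat -> u i <= v i) -> RS u K <= RS v K.
Proof. induction K; simpl; intros H. lra. pose proof (H K ltac:(lia)). pose proof (IHK ltac:(intros; apply H; lia)). unfold RS in *. lra. Qed.
Lemma RS_nonneg u K : (forall i, (i < K)%nat -> 0 <= u i) -> 0 <= RS u K.
Proof. intros H. replace 0 with (RS (fun _ => 0) K) by (apply RS_zero; auto). apply RS_le; auto. Qed.
Lemma RS_abs u K : Rabs (RS u K) <= RS (fun i => Rabs (u i)) K.
Proof. induction K; simpl. rewrite Rabs_R0; lra. unfold RS in *. eapply Rle_trans. apply Rabs_triang. lra. Qed.
Lemma RS_sumf f m k : sum_f m (m + k) f = RS (fun i => f (i + m)%nat) (S k).
Proof.
  unfold sum_f. replace (m + k - m)%nat with k by lia.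
  induction k; simpl. unfold RS; simpl; lra.
  rewrite IHk. reflexivity.
Qed.
Lemma RS_shift (u : nat -> R) m L :
  RS (fun i => u (i + m)%nat) L = RS (fun j => if (m <=? j)%nat then u j else 0) (m + L).
Proof. apply gs_shift; intros; lra. Qed.

Declare Scope vscope.
Section Vec.
Variable X : BanachSpace.
Notation "a + b" := (vadd X a b) : vscope.
Notation "c * a" := (vscal X c a) : vscope.
Notation "0" := (vzero X) : vscope.
Notation N := (vnorm X).
Delimit Scope vscope with V.

Lemma vadd0l (x : X) : (0 + x = x)%V.
Proof. rewrite vadd_comm; apply vadd_0. Qed.

Lemma vcancel (a b c : X) : (a + b = a + c)%V -> b = c.
Proof.
  intros H. assert (H2 : (vopp X a + (a + b) = vopp X a + (a + c))%V) by now rewrite H.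
  rewrite !vadd_assoc in H2. rewrite (vadd_comm X (vopp X a) a), vadd_opp, !vadd0l in H2. exact H2.
Qed.

Lemma vscal0 (x : X) : (0%R * x = 0)%V.
Proof.
  apply (vcancel (vscal X 0 x)). rewrite vadd_0, <- vscal_distr_s. f_equal; ring.
Qed.

Lemma vscalz (a : R) : (a * 0 = 0)%V.
Proof.
  apply (vcancel (vscal X a (vzero X))). rewrite vadd_0, <- vscal_distr_v, vadd_0. auto.
Qed.

Lemma vopp_scal (x : X) : vopp X x = vscal X (-1) x.
Proof.
  apply (vcancel x). rewrite vadd_opp. rewrite <- (vscal_1 X x) at 1.
  rewrite <- vscal_distr_s. replace (1 + -1) with 0 by ring. symmetry; apply vscal0.
Qed.

Lemma vnorm0 : N (vzero X) = 0.
Proof. rewrite <- (vscal0 (vzero X)), vnorm_scal, Rabs_R0; ring. Qed.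

Lemma vnorm_opp (x : X) : N (vopp X x) = N x.
Proof. rewrite vopp_scal, vnorm_scal, Rabs_left by lra; ring. Qed.

Lemma vopp_l (x : X) : (vopp X x + x = 0)%V.
Proof. rewrite vadd_comm; apply vadd_opp. Qed.

Lemma vadd_swap4 (a b c d : X) : ((a + b) + (c + d) = (a + c) + (b + d))%V.
Proof.
  rewrite <- !vadd_assoc. f_equal. rewrite !vadd_assoc. f_equal. apply vadd_comm.
Qed.

Lemma vscal_scal_sum (a b : R) (x : X) : vadd X (vscal X a x) (vscal X b x) = vscal X (a + b) x.
Proof. symmetry; apply vscal_distr_s. Qed.

Lemma vnorm_triangle3 (x y : X) : N (vadd X x y) >= N y - N x.
Proof.
  pose proof (vnorm_triangle X (vopp X x) (vadd X x y)).
  rewrite vadd_assoc, vopp_l, vadd0l, vnorm_opp in H. lra.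
Qed.

Definition VS := gs X (vadd X) (vzero X).

Lemma VS_ext u v K : (forall i, (i < K)%nat -> u i = v i) -> VS u K = VS v K.
Proof. apply gs_ext; intros; first [apply vadd_assoc|apply vadd_comm|apply vadd_0]. Qed.
Lemma VS_zero u K : (forall i, (i < K)%nat -> u i = vzero X) -> VS u K = vzero X.
Proof. apply gs_zero; intros; first [apply vadd_assoc|apply vadd_comm|apply vadd_0]. Qed.
Lemma VS_extend u K K' : (K <= K')%nat -> (forall i, (K <= i < K')%nat -> u i = vzero X) ->
  VS u K' = VS u K.
Proof. apply gs_extend; intros; first [apply vadd_assoc|apply vadd_comm|apply vadd_0]. Qed.
Lemma VS_add u v K : VS (fun i => vadd X (u i) (v i)) K = vadd X (VS u K) (VS v K).
Proof. apply gs_add; intros; first [apply vadd_assoc|apply vadd_comm|apply vadd_0]. Qed.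
Lemma VS_swap (u : nat -> nat -> X) K L :
  VS (fun i => VS (fun j => u i j) L) K = VS (fun j => VS (fun i => u i j) K) L.
Proof. apply gs_swap; intros; first [apply vadd_assoc|apply vadd_comm|apply vadd_0]. Qed.
Lemma VS_single u K i0 : (i0 < K)%nat -> (forall i, (i < K)%nat -> i <> i0 -> u i = vzero X) ->
  VS u K = u i0.
Proof. apply gs_single; intros; first [apply vadd_assoc|apply vadd_comm|apply vadd_0]. Qed.
Lemma VS_scal c u K : vscal X c (VS u K) = VS (fun i => vscal X c (u i)) K.
Proof. unfold VS. apply (gs_hom _ _ _ _ _ _ (fun x => vscal X c x)). intros; apply vscal_distr_v. apply vscalz. Qed.
Lemma VS_scal_sum a v K : vscal X (RS a K) v = VS (fun i => vscal X (a i) v) K.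
Proof. unfold VS, RS. apply (gs_hom _ _ _ _ _ _ (fun c => vscal X c v)). intros; apply vscal_distr_s. apply vscal0. Qed.
Lemma VS_norm u K : N (VS u K) <= RS (fun i => N (u i)) K.
Proof.
  induction K; simpl. unfold VS; simpl; rewrite vnorm0; unfold RS; simpl; lra.
  unfold VS, RS in *; simpl. eapply Rle_trans. apply vnorm_triangle. lra.
Qed.

Lemma VS_shift (u : nat -> X) m L :
  VS (fun i => u (i + m)%nat) L = VS (fun j => if (m <=? j)%nat then u j else vzero X) (m + L).
Proof. apply gs_shift; intros; first [apply vadd_assoc|apply vadd_comm|apply vadd_0]. Qed.

Lemma blf_opp f : bounded_linear_functional f -> forall x, f (vopp X x) = - f x.
Proof. intros [_ [Hs _]] x. rewrite vopp_scal, Hs. ring. Qed.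

Lemma blf_VS f : bounded_linear_functional f -> forall u K, f (VS u K) = RS (fun i => f (u i)) K.
Proof.
  intros Hf u K. destruct Hf as [Ha [Hs _]].
  unfold VS, RS. apply (gs_hom _ _ _ _ _ _ f). auto.
  rewrite <- (vscal0 (vzero X)), Hs. ring.
Qed.

End Vec.

Section BW.
Variable T : Type.
Variable le : T -> T -> Prop.
Hypothesis le_refl : forall x, le x x.
Hypothesis le_trans : forall x y z, le x y -> le y z -> le x z.
Hypothesis le_antisym : forall x y, le x y -> le y x -> x = y.
Definition chain (C : T -> Prop) := forall x y, C x -> C y -> le x y \/ le y x.
Variable sup : (T -> Prop) -> T.
Hypothesis sup_ub : forall C x, chain C -> C x -> le x (sup C).
Hypothesis sup_least : forall C v, chain C -> (forall x, C x -> le x v) -> le (sup C) v.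
Variable f : T -> T.
Hypothesis f_infl : forall x, le x (f x).

Definition closed (P : T -> Prop) :=
  (forall x, P x -> P (f x)) /\ (forall C, chain C -> (forall x, C x -> P x) -> P (sup C)).
Definition M (x : T) := forall P, closed P -> P x.

Lemma M_closed : closed M.
Proof.
  split.
  - intros x Hx P HP. apply (proj1 HP). apply Hx, HP.
  - intros C HC HCM P HP. apply (proj2 HP); auto. intros x Cx. apply HCM; auto.
Qed.

Definition extreme c := forall x, M x -> le x c -> x = c \/ le (f x) c.

Lemma lemma1 c : M c -> extreme c -> forall x, M x -> le x c \/ le (f c) x.
Proof.
  intros Mc Ec x Mx.
  pose (P := fun x => M x /\ (le x c \/ le (f c) x)).
  assert (HP : closed P).
  { split.
    - intros y [My [H|H]]; (split; [apply (proj1 M_closed); auto|]).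
      + destruct (Ec y My H) as [->|H2]. right; apply le_refl. left; auto.
      + right. eapply le_trans; eauto.
    - intros C HC HCP. split.
      + apply (proj2 M_closed); auto. intros; apply HCP; auto.
      + destruct (classic (exists y, C y /\ ~ le y c)) as [[y [Cy Hy]]|Hn].
        * right. destruct (proj2 (HCP y Cy)) as [H|H]; [contradiction|].
          eapply le_trans; eauto.
        * left. apply sup_least; auto. intros y Cy.
          destruct (classic (le y c)); auto. exfalso; eauto. }
  apply (Mx P HP).
Qed.

Lemma all_extreme : forall c, M c -> extreme c.
Proof.
  intros c Mc.
  pose (P := fun c => M c /\ extreme c).
  assert (HP : closed P).
  { split.
    - intros c0 [M0 E0]. split. apply (proj1 M_closed); auto.
      intros x Mx Hx. destruct (lemma1 c0 M0 E0 x Mx) as [H|H].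
      + destruct (E0 x Mx H) as [->|H2]. right; apply le_refl.
        right. eapply le_trans; eauto.
      + left. apply le_antisym; auto.
    - intros C HC HCP. assert (MS : M (sup C)).
      { apply (proj2 M_closed); auto. intros; apply HCP; auto. }
      split; auto. intros x Mx Hx.
      destruct (classic (exists c0, C c0 /\ le x c0)) as [[c0 [C0 H0]]|Hn].
      + destruct (HCP c0 C0) as [M0 E0].
        destruct (E0 x Mx H0) as [->|H2].
        * destruct (lemma1 c0 M0 E0 (sup C) MS) as [H3|H3].
          -- left. apply le_antisym; auto.
          -- right; auto.
        * right. eapply le_trans; eauto.
      + left. apply le_antisym; auto. apply sup_least; auto.
        intros y Cy. destruct (HCP y Cy) as [My Ey].
        destruct (lemma1 y My Ey x Mx) as [H|H].
        * exfalso; eauto.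
        * eapply le_trans; [apply f_infl|exact H]. }
  apply (Mc P HP).
Qed.

Lemma M_chain : chain M.
Proof.
  intros x y Mx My. destruct (lemma1 y My (all_extreme y My) x Mx) as [H|H]; auto.
  right. eapply le_trans; [apply f_infl|exact H].
Qed.

Lemma BW_fix : exists x, f x = x.
Proof.
  exists (sup M). assert (MS : M (sup M)).
  { apply (proj2 M_closed). apply M_chain. auto. }
  apply le_antisym; auto. apply sup_ub. apply M_chain. apply (proj1 M_closed); auto.
Qed.
End BW.

Lemma zorn (T : Type) (le : T -> T -> Prop)
  (le_refl : forall x, le x x)
  (le_trans : forall x y z, le x y -> le y z -> le x z)
  (le_antisym : forall x y, le x y -> le y x -> x = y)
  (lub : forall C, chain T le C -> exists u, (forall x, C x -> le x u) /\
           (forall v, (forall x, C x -> le x v) -> le u v)) :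
  exists m, forall x, le m x -> x = m.
Proof.
  destruct (classic (exists m, forall x, le m x -> x = m)) as [H|H]; auto. exfalso.
  assert (Hs : forall m, exists x, le m x /\ x <> m).
  { intros m. apply NNPP. intros Hn. apply H. exists m. intros x Hx.
    apply NNPP. intros Hx2. apply Hn. eauto. }
  destruct (lub (fun _ => False)) as [t0 _]. { intros x y []. }
  pose (f := fun m => proj1_sig (constructive_indefinite_description _ (Hs m))).
  assert (Hf : forall m, le m (f m) /\ f m <> m).
  { intros m. unfold f. destruct (constructive_indefinite_description _ _); auto. }
  assert (Hsup : forall C, exists u, chain T le C -> (forall x, C x -> le x u) /\
           (forall v, (forall x, C x -> le x v) -> le u v)).
  { intros C. destruct (classic (chain T le C)) as [HC|HC].
    - destruct (lub C HC) as [u Hu]. exists u; auto.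
    - exists t0. intros; contradiction. }
  pose (sup := fun C => proj1_sig (constructive_indefinite_description _ (Hsup C))).
  assert (Hsp : forall C, chain T le C -> (forall x, C x -> le x (sup C)) /\
           (forall v, (forall x, C x -> le x v) -> le (sup C) v)).
  { intros C. unfold sup. destruct (constructive_indefinite_description _ _); auto. }
  destruct (BW_fix T le le_refl le_trans le_antisym sup
     (fun C x HC => proj1 (Hsp C HC) x) (fun C v HC => proj2 (Hsp C HC) v) f
     (fun m => proj1 (Hf m))) as [x Hx].
  apply (proj2 (Hf x)); auto.
Qed.

Lemma glb_ex (E : R -> Prop) : (exists r, E r) -> (exists b, forall r, E r -> b <= r) ->
  exists g, is_glb E g.
Proof.
  intros [r0 Hr0] [b Hb].
  destruct (completeness (fun y => E (- y))) as [m [Hm1 Hm2]].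
  - exists (- b). intros y Hy. specialize (Hb _ Hy). lra.
  - exists (- r0). rewrite Ropp_involutive. auto.
  - exists (- m). split.
    + intros r Hr. assert (- r <= m) by (apply Hm1; rewrite Ropp_involutive; auto). lra.
    + intros c Hc. assert (m <= - c). { apply Hm2. intros y Hy. specialize (Hc _ Hy). lra. } lra.
Qed.

Lemma glb_le E g r : is_glb E g -> E r -> g <= r.
Proof. intros [H _]; auto. Qed.
Lemma glb_ge E g b : is_glb E g -> (forall r, E r -> b <= r) -> b <= g.
Proof. intros [_ H]; auto. Qed.

Lemma glb_subadd E1 E2 g1 g2 g3 : is_glb E1 g1 -> is_glb E2 g2 ->
  (forall r1 r2, E1 r1 -> E2 r2 -> g3 <= r1 + r2) -> g3 <= g1 + g2.
Proof.
  intros H1 H2 H.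
  assert (forall r2, E2 r2 -> g3 - r2 <= g1).
  { intros r2 Hr2. apply (glb_ge _ _ _ H1). intros r1 Hr1. specialize (H _ _ Hr1 Hr2). lra. }
  assert (g3 - g1 <= g2).
  { apply (glb_ge _ _ _ H2). intros r2 Hr2. specialize (H0 _ Hr2). lra. }
  lra.
Qed.

Lemma glb_scale E1 E2 g1 g2 a : 0 < a -> is_glb E1 g1 -> is_glb E2 g2 ->
  (forall r, E1 r -> E2 (a * r)) -> (forall r, E2 r -> E1 (r / a)) -> g2 = a * g1.
Proof.
  intros Ha H1 H2 A B. apply Rle_antisym.
  - assert (g2 / a <= g1).
    { apply (glb_ge _ _ _ H1). intros r Hr. pose proof (glb_le _ _ _ H2 (A r Hr)).
      apply (Rmult_le_reg_l a); auto. field_simplify; lra. }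
    apply (Rmult_le_compat_l a) in H; [|lra]. field_simplify in H; lra.
  - apply (glb_ge _ _ _ H2). intros r Hr. pose proof (glb_le _ _ _ H1 (B r Hr)).
    apply (Rmult_le_compat_l a) in H; [|lra]. field_simplify in H; lra.
Qed.

Section HB.
Variable X : BanachSpace.

Definition sublin (q : X -> R) :=
  (forall x y, q (vadd X x y) <= q x + q y) /\ (forall a x, 0 < a -> q (vscal X a x) = a * q x).

Lemma sublin_0 q : sublin q -> q (vzero X) = 0.
Proof.
  intros [_ H]. pose proof (H 2 (vzero X) ltac:(lra)). rewrite vscalz in H0. lra.
Qed.

Lemma sublin_scal0 q t x : sublin q -> 0 <= t -> q (vscal X t x) = t * q x.
Proof.
  intros Hq Ht. destruct (Req_dec t 0) as [->|Ht0].
  - rewrite vscal0, sublin_0; auto; ring.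
  - apply (proj2 Hq); lra.
Qed.

Lemma sublin_opp q x : sublin q -> - q (vopp X x) <= q x.
Proof.
  intros Hq. pose proof (proj1 Hq x (vopp X x)). rewrite vadd_opp, sublin_0 in H; auto. lra.
Qed.

Variable p : X -> R.
Hypothesis Hp : sublin p.

Definition PT := { q : X -> R | sublin q /\ forall x, q x <= p x }.
Definition PTle (a b : PT) := forall x, proj1_sig b x <= proj1_sig a x.

Lemma PT_eq (a b : PT) : (forall x, proj1_sig a x = proj1_sig b x) -> a = b.
Proof.
  destruct a as [qa Ha], b as [qb Hb]; simpl; intros H.
  assert (qa = qb) by (apply functional_extensionality; auto). subst.
  f_equal. apply proof_irrelevance.
Qed.

Lemma sublin_lower q x : sublin q -> (forall x, q x <= p x) -> - p (vopp X x) <= q x.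
Proof. intros Hq Hle. pose proof (sublin_opp q x Hq). pose proof (Hle (vopp X x)). lra. Qed.

Lemma p_lower x : - p (vopp X x) <= p x.
Proof. apply sublin_opp; auto. Qed.

Lemma PT_lub : forall C, chain PT PTle C -> exists u, (forall x, C x -> PTle x u) /\
           (forall v, (forall x, C x -> PTle x v) -> PTle u v).
Proof.
  intros C HC.
  pose (E := fun x r => r = p x \/ exists q, C q /\ r = proj1_sig q x).
  assert (HE : forall x, exists g, is_glb (E x) g).
  { intros x. apply glb_ex. exists (p x); left; auto.
    exists (- p (vopp X x)). intros r [->|[q [_ ->]]]. apply p_lower.
    destruct q as [q [Hq1 Hq2]]; simpl. apply sublin_lower; auto. }
  pose (u := fun x => proj1_sig (constructive_indefinite_description _ (HE x))).
  assert (Hu : forall x, is_glb (E x) (u x)).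
  { intros x; unfold u; destruct (constructive_indefinite_description _ _); auto. }
  assert (Hsub : sublin u).
  { split.
    - intros x y. apply (glb_subadd (E x) (E y)); auto.
      intros r1 r2 [->|[q1 [C1 ->]]] [->|[q2 [C2 ->]]].
      + eapply Rle_trans. apply (glb_le _ _ _ (Hu _)). left; eauto. apply (proj1 Hp).
      + apply Rle_trans with (proj1_sig q2 (vadd X x y)).
        apply (glb_le _ _ _ (Hu _)). right. exists q2. split; auto.
        destruct q2 as [q2 [H21 H22]]; simpl. pose proof (proj1 H21 x y). pose proof (H22 x). lra.
      + apply Rle_trans with (proj1_sig q1 (vadd X x y)).
        apply (glb_le _ _ _ (Hu _)). right. exists q1. split; auto.
        destruct q1 as [q1 [H11 H12]]; simpl. pose proof (proj1 H11 x y). pose proof (H12 y). lra.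
      + destruct (HC q1 q2 C1 C2) as [H|H]; unfold PTle in H.
        * apply Rle_trans with (proj1_sig q2 (vadd X x y)).
          apply (glb_le _ _ _ (Hu _)). right. exists q2. split; auto.
          destruct q2 as [q2 [H21 H22]]; simpl in *. pose proof (proj1 H21 x y). pose proof (H x). lra.
        * apply Rle_trans with (proj1_sig q1 (vadd X x y)).
          apply (glb_le _ _ _ (Hu _)). right. exists q1. split; auto.
          destruct q1 as [q1 [H11 H12]]; simpl in *. pose proof (proj1 H11 x y). pose proof (H y). lra.
    - intros a x Ha. apply (glb_scale (E x) (E (vscal X a x))); auto.
      + intros r [->|[q [Cq ->]]].
        * left. symmetry; apply (proj2 Hp); auto.
        * right. exists q. split; auto. destruct q as [q [Hq1 Hq2]]; simpl. symmetry; apply (proj2 Hq1); auto.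
      + intros r [->|[q [Cq ->]]].
        * left. rewrite (proj2 Hp); auto. field; lra.
        * right. exists q. split; auto. destruct q as [q [Hq1 Hq2]]; simpl. rewrite (proj2 Hq1); auto. field; lra. }
  assert (Hup : forall x, u x <= p x).
  { intros x. apply (glb_le _ _ _ (Hu x)). left; auto. }
  exists (exist _ u (conj Hsub Hup)). split.
  - intros q Cq x; simpl. apply (glb_le _ _ _ (Hu x)). right; eauto.
  - intros v Hv x; simpl. apply (glb_ge _ _ _ (Hu x)). intros r [->|[q [Cq ->]]].
    + destruct v as [v [Hv1 Hv2]]; simpl; auto.
    + apply (Hv q Cq).
Qed.

Lemma vlin_comb (x y z : X) t s :
  vadd X (vadd X x (vscal X t z)) (vadd X y (vscal X s z)) = vadd X (vadd X x y) (vscal X (t + s) z).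
Proof. rewrite vadd_swap4, vscal_scal_sum. auto. Qed.

Lemma vlin_scal (x z : X) a t :
  vscal X a (vadd X x (vscal X t z)) = vadd X (vscal X a x) (vscal X (a * t) z).
Proof. rewrite vscal_distr_v, vscal_assoc. auto. Qed.

Lemma minimal_linear (q : X -> R) : sublin q -> (forall x, q x <= p x) ->
  (forall q', sublin q' -> (forall x, q' x <= q x) -> forall x, q' x = q x) ->
  forall z, q (vopp X z) = - q z.
Proof.
  intros Hq Hqp Hmin z.
  pose (E := fun x r => exists t, 0 <= t /\ r = q (vadd X x (vscal X t z)) - t * q z).
  assert (HE : forall x, exists g, is_glb (E x) g).
  { intros x. apply glb_ex. exists (q (vadd X x (vscal X 0 z)) - 0 * q z). exists 0; split; auto; lra.
    exists (- q (vopp X x)). intros r [t [Ht ->]].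
    pose proof (proj1 Hq (vadd X x (vscal X t z)) (vopp X x)).
    assert (E1 : vadd X (vadd X x (vscal X t z)) (vopp X x) = vscal X t z).
    { rewrite (vadd_comm X x), <- vadd_assoc, vadd_opp, vadd_0. auto. }
    rewrite E1 in H.
    rewrite sublin_scal0 in H; auto. lra. }
  pose (u := fun x => proj1_sig (constructive_indefinite_description _ (HE x))).
  assert (Hu : forall x, is_glb (E x) (u x)).
  { intros x; unfold u; destruct (constructive_indefinite_description _ _); auto. }
  assert (Hsub : sublin u).
  { split.
    - intros x y. apply (glb_subadd (E x) (E y)); auto.
      intros r1 r2 [t [Ht ->]] [s [Hs ->]].
      eapply Rle_trans. apply (glb_le _ _ _ (Hu _)). exists (t + s). split. lra. reflexivity.
      rewrite <- vlin_comb. pose proof (proj1 Hq (vadd X x (vscal X t z)) (vadd X y (vscal X s z))). lra.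
    - intros a x Ha. apply (glb_scale (E x) (E (vscal X a x))); auto.
      + intros r [t [Ht ->]]. exists (a * t). split. apply Rmult_le_pos; lra.
        rewrite <- vlin_scal, (proj2 Hq); auto. ring.
      + intros r [t [Ht ->]]. exists (t / a). split. unfold Rdiv; apply Rmult_le_pos; [lra|apply Rlt_le, Rinv_0_lt_compat; lra].
        assert (vadd X (vscal X a x) (vscal X t z) = vscal X a (vadd X x (vscal X (t / a) z))).
        { rewrite vlin_scal. f_equal. f_equal. field. lra. }
        rewrite H, (proj2 Hq); auto. field. lra. }
  assert (Huq : forall x, u x <= q x).
  { intros x. eapply Rle_trans. apply (glb_le _ _ _ (Hu x)). exists 0. split. lra. reflexivity.
    rewrite vscal0, vadd_0. lra. }
  pose proof (Hmin u Hsub Huq) as Heq.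
  assert (q (vopp X z) <= - q z).
  { rewrite <- Heq. eapply Rle_trans. apply (glb_le _ _ _ (Hu _)). exists 1. split. lra. reflexivity.
    rewrite vscal_1, vopp_l, sublin_0; auto. lra. }
  pose proof (sublin_opp q z Hq). lra.
Qed.

Theorem hahn_banach : exists f : X -> R,
  (forall x y, f (vadd X x y) = f x + f y) /\ (forall a x, f (vscal X a x) = a * f x) /\
  (forall x, f x <= p x).
Proof.
  destruct (zorn PT PTle) as [m Hm].
  - intros x y; lra.
  - intros x y z H1 H2 w. specialize (H1 w); specialize (H2 w). lra.
  - intros x y H1 H2. apply PT_eq. intros w. specialize (H1 w); specialize (H2 w). lra.
  - apply PT_lub.
  - destruct m as [q [Hq Hqp]]. simpl in Hm.
    assert (Hmin : forall q', sublin q' -> (forall x, q' x <= q x) -> forall x, q' x = q x).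
    { intros q' Hq' Hle.
      assert (Hq'p : forall x, q' x <= p x) by (intros x; eapply Rle_trans; eauto).
      specialize (Hm (exist _ q' (conj Hq' Hq'p))). unfold PTle in Hm; simpl in Hm.
      specialize (Hm Hle). intros x. change q' with (proj1_sig (exist (fun q0 => sublin q0 /\ (forall x, q0 x <= p x)) q' (conj Hq' Hq'p))).
      rewrite Hm. reflexivity. }
    pose proof (minimal_linear q Hq Hqp Hmin) as Hopp.
    exists q. split; [|split]; auto.
    + intros x y. apply Rle_antisym. apply (proj1 Hq).
      pose proof (proj1 Hq (vadd X x y) (vopp X y)).
      rewrite <- vadd_assoc, vadd_opp, vadd_0, Hopp in H. lra.
    + intros a x. destruct (Rtotal_order a 0) as [Ha|[->|Ha]].
      * assert (vscal X a x = vopp X (vscal X (- a) x)).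
        { rewrite vopp_scal, vscal_assoc. f_equal. ring. }
        rewrite H, Hopp, (proj2 Hq); [ring|lra].
      * rewrite vscal0, sublin_0; auto; ring.
      * apply (proj2 Hq); auto.
Qed.
End HB.

Section Sep.
Variable X : BanachSpace.

Definition trunc (mu : nat -> R) L i := if (i <? L)%nat then mu i else 0.

Lemma RS_trunc mu L K : (L <= K)%nat -> RS (trunc mu L) K = RS mu L.
Proof.
  intros H. rewrite (RS_extend _ L K H).
  - apply RS_ext. intros i Hi. unfold trunc. replace (i <? L)%nat with true; auto. symmetry; apply Nat.ltb_lt; auto.
  - intros i Hi. unfold trunc. replace (i <? L)%nat with false; auto. symmetry; apply Nat.ltb_ge; lia.
Qed.

Lemma VS_trunc mu (G : nat -> X) L K : (L <= K)%nat ->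
  VS X (fun i => vscal X (trunc mu L i) (G i)) K = VS X (fun i => vscal X (mu i) (G i)) L.
Proof.
  intros H. rewrite (VS_extend X _ L K H).
  - apply VS_ext. intros i Hi. unfold trunc. replace (i <? L)%nat with true; auto. symmetry; apply Nat.ltb_lt; auto.
  - intros i Hi. unfold trunc. replace (i <? L)%nat with false. apply vscal0. symmetry; apply Nat.ltb_ge; lia.
Qed.

Lemma separation (G : nat -> X) (d : R) : 0 < d ->
  (forall mu L, (forall i, 0 <= mu i) -> d * RS mu L <= vnorm X (VS X (fun i => vscal X (mu i) (G i)) L)) ->
  exists f, bounded_linear_functional f /\ forall i, d <= f (G i).
Proof.
  intros Hd HG.
  pose (P := fun z r => exists mu L, (forall i, 0 <= mu i) /\
      r = vnorm X (vadd X z (VS X (fun i => vscal X (mu i) (G i)) L)) - d * RS mu L).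
  assert (HE : forall z, exists g, is_glb (P z) g).
  { intros z. apply glb_ex.
    - exists (vnorm X (vadd X z (VS X (fun i => vscal X 0 (G i)) 0)) - d * RS (fun _ => 0) 0).
      exists (fun _ => 0), 0%nat. split; auto. intros; lra.
    - exists (- vnorm X z). intros r [mu [L [Hmu ->]]].
      pose proof (HG mu L Hmu). pose proof (vnorm_triangle3 X z (VS X (fun i => vscal X (mu i) (G i)) L)). lra. }
  pose (p := fun x => proj1_sig (constructive_indefinite_description _ (HE x))).
  assert (Hu : forall x, is_glb (P x) (p x)).
  { intros x; unfold p; destruct (constructive_indefinite_description _ _); auto. }
  assert (Hsub : sublin X p).
  { split.
    - intros x y. apply (glb_subadd (P x) (P y)); auto.
      intros r1 r2 [mu1 [L1 [H1 ->]]] [mu2 [L2 [H2 ->]]].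
      eapply Rle_trans. apply (glb_le _ _ _ (Hu _)).
      exists (fun i => trunc mu1 L1 i + trunc mu2 L2 i), (L1 + L2)%nat. split.
      { intros i. unfold trunc. destruct (i <? L1)%nat, (i <? L2)%nat; try specialize (H1 i); try specialize (H2 i); lra. }
      reflexivity.
      rewrite RS_add, !RS_trunc by lia.
      erewrite VS_ext; [|intros i _; apply vscal_distr_s].
      rewrite VS_add, !VS_trunc by lia. rewrite vadd_swap4.
      pose proof (vnorm_triangle X (vadd X x (VS X (fun i => vscal X (mu1 i) (G i)) L1))
          (vadd X y (VS X (fun i => vscal X (mu2 i) (G i)) L2))). lra.
    - intros a x Ha. apply (glb_scale (P x) (P (vscal X a x))); auto.
      + intros r [mu [L [Hmu ->]]]. exists (fun i => a * mu i), L. split.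
        intros i; specialize (Hmu i); apply Rmult_le_pos; lra.
        rewrite <- RS_scal.
        assert (E1 : VS X (fun i => vscal X (a * mu i) (G i)) L = vscal X a (VS X (fun i => vscal X (mu i) (G i)) L)).
        { rewrite VS_scal. apply VS_ext. intros; symmetry; apply vscal_assoc. }
        rewrite E1, <- vscal_distr_v, vnorm_scal, Rabs_pos_eq by lra. ring.
      + intros r [mu [L [Hmu ->]]]. exists (fun i => mu i / a), L. split.
        intros i; specialize (Hmu i); unfold Rdiv; apply Rmult_le_pos; [lra|apply Rlt_le, Rinv_0_lt_compat; lra].
        assert (E1 : vadd X (vscal X a x) (VS X (fun i => vscal X (mu i) (G i)) L) =
             vscal X a (vadd X x (VS X (fun i => vscal X (mu i / a) (G i)) L))).
        { rewrite vscal_distr_v, VS_scal. f_equal. apply VS_ext. intros i _. rewrite vscal_assoc. f_equal. field. lra. }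
        rewrite E1, vnorm_scal, Rabs_pos_eq by lra.
        replace (RS (fun i => mu i / a) L) with (/ a * RS mu L).
        field. lra. rewrite RS_scal. apply RS_ext. intros; unfold Rdiv; ring. }
  destruct (hahn_banach X p Hsub) as [f [Hf1 [Hf2 Hf3]]].
  assert (Hpn : forall x, p x <= vnorm X x).
  { intros x. eapply Rle_trans. apply (glb_le _ _ _ (Hu x)). exists (fun _ => 0), 0%nat. split. intros; lra. reflexivity.
    simpl. unfold VS; simpl. rewrite vadd_0. unfold RS; simpl. lra. }
  assert (Hfo : forall x, f (vopp X x) = - f x).
  { intros x. rewrite vopp_scal, Hf2. ring. }
  exists f. split.
  - split; auto. split; auto. exists 1. intros x. apply Rabs_le. split.
    + pose proof (Hf3 (vopp X x)). pose proof (Hpn (vopp X x)). rewrite Hfo, vnorm_opp in *. lra.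
    + pose proof (Hf3 x). pose proof (Hpn x). lra.
  - intros i. pose proof (Hf3 (vopp X (G i))). rewrite Hfo in H.
    assert (p (vopp X (G i)) <= - d).
    { eapply Rle_trans. apply (glb_le _ _ _ (Hu _)).
      exists (fun j => if (j =? i)%nat then 1 else 0), (S i). split.
      intros j; destruct (j =? i)%nat; lra. reflexivity.
      rewrite (VS_single X _ (S i) i), (RS_single _ (S i) i).
      - rewrite Nat.eqb_refl, vscal_1, vopp_l, vnorm0. lra.
      - lia.
      - intros j _ Hj. apply Nat.eqb_neq in Hj. rewrite Hj. auto.
      - lia.
      - intros j _ Hj. apply Nat.eqb_neq in Hj. rewrite Hj. apply vscal0. }
    lra.
Qed.
End Sep.

Section Cm.
Variable X : BanachSpace.

Definition CS (z : nat -> X) m r := exists a K, (forall n, a n <> 0 -> (m <= n < K)%nat) /\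
  RS (fun n => Rabs (a n)) K = 1 /\ r = vnorm X (VS X (fun n => vscal X (a n) (z n)) K).

Lemma vsum_VS a (x : nat -> X) m k : vsum a x m k = VS X (fun i => vscal X (a (i + m)%nat) (x (i + m)%nat)) (S k).
Proof.
  induction k; simpl.
  - unfold VS; simpl. rewrite vadd0l. auto.
  - rewrite IHk. unfold VS; simpl. f_equal. rewrite (Nat.add_comm m (S k)). auto.
Qed.

Lemma RS_abs_single u K : (forall i j, (i < K)%nat -> (j < K)%nat -> i <> j -> u i = 0 \/ u j = 0) ->
  Rabs (RS u K) = RS (fun i => Rabs (u i)) K.
Proof.
  induction K; intros H. unfold RS; simpl; apply Rabs_R0.
  change (Rabs (RS u K + u K) = RS (fun i => Rabs (u i)) K + Rabs (u K)).
  destruct (Req_dec (u K) 0) as [E|E].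
  - rewrite E, Rabs_R0, !Rplus_0_r. apply IHK. intros; apply H; lia.
  - rewrite (RS_zero u K), (RS_zero (fun i => Rabs (u i)) K).
    + rewrite !Rplus_0_l; auto.
    + intros i Hi. destruct (H i K ltac:(lia) ltac:(lia) ltac:(lia)) as [E2|E2]; [rewrite E2; apply Rabs_R0|contradiction].
    + intros i Hi. destruct (H i K ltac:(lia) ltac:(lia) ltac:(lia)) as [E2|E2]; [auto|contradiction].
Qed.

Lemma supp_lt a N K : (forall n, a n <> 0 -> (N <= n < K)%nat) -> RS (fun n => Rabs (a n)) K = 1 -> (N < K)%nat.
Proof.
  intros Hs H1. destruct (Nat.lt_ge_cases N K) as [H|H]; auto.
  rewrite RS_zero in H1. lra. intros i Hi. destruct (Req_dec (a i) 0) as [E|E].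
  rewrite E; apply Rabs_R0. specialize (Hs i E). lia.
Qed.

Lemma cm_set_iff (z : nat -> X) m r : cm_set z m r <-> CS z m r.
Proof.
  split.
  - intros [a [k [H1 H2]]].
    pose (a' := fun n => if ((m <=? n) && (n <? m + S k))%nat then a n else 0).
    exists a', (m + S k)%nat. split; [|split].
    + intros n Hn. unfold a' in Hn. destruct ((m <=? n) && (n <? m + S k))%nat eqn:E; [|lra].
      apply andb_prop in E. destruct E as [E1 E2]. apply Nat.leb_le in E1. apply Nat.ltb_lt in E2. lia.
    + rewrite RS_sumf in H1. rewrite <- H1. rewrite (RS_shift (fun n => Rabs (a n))).
      apply RS_ext. intros i Hi. unfold a'. destruct (m <=? i)%nat eqn:E; simpl.
      * replace (i <? m + S k)%nat with true by (symmetry; apply Nat.ltb_lt; lia). auto.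
      * rewrite Rabs_R0; auto.
    + rewrite H2, vsum_VS. f_equal. rewrite (VS_shift X (fun n => vscal X (a n) (z n))).
      apply VS_ext. intros i Hi. unfold a'. destruct (m <=? i)%nat eqn:E; simpl.
      * replace (i <? m + S k)%nat with true by (symmetry; apply Nat.ltb_lt; lia). auto.
      * rewrite vscal0; auto.
  - intros [a [K [Hs [H1 H2]]]].
    pose proof (supp_lt a m K Hs H1) as HK.
    exists a, (K - m - 1)%nat. split.
    + rewrite RS_sumf, <- H1. replace K with (m + S (K - m - 1))%nat at 2 by lia.
      rewrite (RS_shift (fun n => Rabs (a n))). apply RS_ext. intros i Hi.
      destruct (m <=? i)%nat eqn:E; auto. apply Nat.leb_gt in E.
      destruct (Req_dec (a i) 0) as [E2|E2]. rewrite E2; symmetry; apply Rabs_R0. specialize (Hs i E2). lia.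
    + rewrite H2, vsum_VS. f_equal. replace K with (m + S (K - m - 1))%nat at 1 by lia.
      rewrite (VS_shift X (fun n => vscal X (a n) (z n))). apply VS_ext. intros i Hi.
      destruct (m <=? i)%nat eqn:E; auto. apply Nat.leb_gt in E.
      destruct (Req_dec (a i) 0) as [E2|E2]. rewrite E2; apply vscal0. specialize (Hs i E2). lia.
Qed.

Lemma CS_nonneg (z : nat -> X) m r : CS z m r -> 0 <= r.
Proof. intros [a [K [_ [_ ->]]]]. apply vnorm_nonneg. Qed.

Lemma CS_single (z : nat -> X) m : CS z m (vnorm X (z m)).
Proof.
  exists (fun n => if (n =? m)%nat then 1 else 0), (S m). split; [|split].
  - intros n Hn. destruct (n =? m)%nat eqn:E; [|lra]. apply Nat.eqb_eq in E. lia.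
  - rewrite (RS_single _ (S m) m); [rewrite Nat.eqb_refl; apply Rabs_R1|lia|].
    intros i _ Hi. apply Nat.eqb_neq in Hi. rewrite Hi. apply Rabs_R0.
  - rewrite (VS_single X _ (S m) m); [rewrite Nat.eqb_refl, vscal_1; auto|lia|].
    intros i _ Hi. apply Nat.eqb_neq in Hi. rewrite Hi. apply vscal0.
Qed.

Lemma cm_ex (z : nat -> X) m : exists c, is_cm z m c.
Proof.
  unfold is_cm. apply glb_ex.
  - exists (vnorm X (z m)). apply cm_set_iff, CS_single.
  - exists 0. intros r Hr. apply cm_set_iff in Hr. eapply CS_nonneg; eauto.
Qed.

Lemma cm_bounds (z : nat -> X) m c : is_cm z m c -> 0 <= c <= vnorm X (z m).
Proof.
  intros H. split.
  - apply (glb_ge _ _ _ H). intros r Hr. apply cm_set_iff in Hr. eapply CS_nonneg; eauto.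
  - apply (glb_le _ _ _ H). apply cm_set_iff, CS_single.
Qed.

Lemma cm_mono (z : nat -> X) m m' c c' : (m <= m')%nat -> is_cm z m c -> is_cm z m' c' -> c <= c'.
Proof.
  intros Hm H H'. apply (glb_ge _ _ _ H'). intros r Hr. apply (glb_le _ _ _ H).
  apply cm_set_iff in Hr. apply cm_set_iff. destruct Hr as [a [K [Hs Hr]]].
  exists a, K. split; auto. intros n Hn. specialize (Hs n Hn). lia.
Qed.

Lemma mono_from (th : nat -> nat) j : (forall n, (j <= n)%nat -> (th n < th (S n))%nat) ->
  forall n1 n2, (j <= n1)%nat -> (n1 < n2)%nat -> (th n1 < th n2)%nat.
Proof.
  intros H n1 n2 H1 H2. induction H2.
  - apply H; auto.
  - specialize (H m ltac:(lia)). lia.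
Qed.

Lemma CS_sub (w z : nat -> X) th j m r :
  (forall n, (j <= n)%nat -> (th n < th (S n))%nat) ->
  (forall n, (j <= n)%nat -> w n = z (th n)) -> (j <= m)%nat ->
  CS w m r -> CS z (th m) r.
Proof.
  intros Hth Hw Hjm [a [K [Hs [H1 ->]]]].
  pose proof (supp_lt a m K Hs H1) as HK.
  pose proof (mono_from th j Hth) as Hmono.
  pose (b := fun k n => if ((m <=? n) && (th n =? k))%nat then a n else 0).
  exists (fun k => RS (fun n => b k n) K), (th K). split; [|split].
  - intros k Hk. destruct (classic (exists n, (n < K)%nat /\ b k n <> 0)) as [[n [Hn Hb]]|Hn].
    + unfold b in Hb. destruct ((m <=? n) && (th n =? k))%nat eqn:E; [|lra].
      apply andb_prop in E. destruct E as [E1 E2]. apply Nat.leb_le in E1. apply Nat.eqb_eq in E2.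
      subst k. split.
      * destruct (Nat.eq_dec m n) as [->|Hne]; [lia|]. pose proof (Hmono m n ltac:(lia) ltac:(lia)). lia.
      * apply Hmono; lia.
    + exfalso. apply Hk. apply RS_zero. intros i Hi. apply NNPP. intros Hb. apply Hn; eauto.
  - rewrite <- H1.
    transitivity (RS (fun k => RS (fun n => Rabs (b k n)) K) (th K)).
    { apply RS_ext. intros k Hk. apply RS_abs_single. intros n1 n2 Hn1 Hn2 Hne. unfold b.
      destruct ((m <=? n1) && (th n1 =? k))%nat eqn:E1; auto.
      destruct ((m <=? n2) && (th n2 =? k))%nat eqn:E2; auto.
      apply andb_prop in E1, E2. destruct E1 as [E1 F1], E2 as [E2 F2].
      apply Nat.leb_le in E1, E2. apply Nat.eqb_eq in F1, F2. exfalso.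
      destruct (Nat.lt_ge_cases n1 n2).
      - pose proof (Hmono n1 n2 ltac:(lia) H). lia.
      - pose proof (Hmono n2 n1 ltac:(lia) ltac:(lia)). lia. }
    rewrite RS_swap. apply RS_ext. intros n Hn.
    destruct (m <=? n)%nat eqn:E.
    + apply Nat.leb_le in E. rewrite (RS_single _ _ (th n)).
      * unfold b. rewrite Nat.eqb_refl. replace (m <=? n)%nat with true by (symmetry; apply Nat.leb_le; lia). auto.
      * destruct (Nat.eq_dec n K); [lia|]. apply Hmono; lia.
      * intros k _ Hk. unfold b. replace (th n =? k)%nat with false by (symmetry; apply Nat.eqb_neq; auto).
        rewrite andb_false_r. apply Rabs_R0.
    + apply Nat.leb_gt in E. rewrite RS_zero. destruct (Req_dec (a n) 0) as [E2|E2]. rewrite E2; symmetry; apply Rabs_R0.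
      specialize (Hs n E2). lia.
      intros k _. unfold b. replace (m <=? n)%nat with false by (symmetry; apply Nat.leb_gt; lia). apply Rabs_R0.
  - symmetry. apply f_equal.
    transitivity (VS X (fun k => VS X (fun n => vscal X (b k n) (z k)) K) (th K)).
    { apply VS_ext. intros k _. apply VS_scal_sum. }
    rewrite VS_swap. apply VS_ext. intros n Hn.
    destruct (m <=? n)%nat eqn:E.
    + apply Nat.leb_le in E. rewrite (VS_single X _ _ (th n)).
      * unfold b. rewrite Nat.eqb_refl. replace (m <=? n)%nat with true by (symmetry; apply Nat.leb_le; lia).
        simpl. rewrite Hw by lia. auto.
      * destruct (Nat.eq_dec n K); [lia|]. apply Hmono; lia.
      * intros k _ Hk. unfold b. replace (th n =? k)%nat with false by (symmetry; apply Nat.eqb_neq; auto).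
        rewrite andb_false_r. apply vscal0.
    + apply Nat.leb_gt in E. rewrite VS_zero. destruct (Req_dec (a n) 0) as [E2|E2]. rewrite E2; symmetry; apply vscal0.
      specialize (Hs n E2). lia.
      intros k _. unfold b. replace (m <=? n)%nat with false by (symmetry; apply Nat.leb_gt; lia). apply vscal0.
Qed.

Lemma cm_sub (w z : nat -> X) th j m c c' :
  (forall n, (j <= n)%nat -> (th n < th (S n))%nat) ->
  (forall n, (j <= n)%nat -> w n = z (th n)) -> (j <= m)%nat ->
  is_cm w m c -> is_cm z (th m) c' -> c' <= c.
Proof.
  intros Hth Hw Hjm H H'. apply (glb_ge _ _ _ H). intros r Hr. apply (glb_le _ _ _ H').
  apply cm_set_iff. apply cm_set_iff in Hr. eapply CS_sub; eauto.
Qed.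
End Cm.

Lemma RS_lin (u v : nat -> R) al be K :
  RS (fun n => al * u n + be * v n) K = al * RS u K + be * RS v K.
Proof. rewrite RS_add, !RS_scal. auto. Qed.

Fixpoint stf (h : nat -> nat) (m i : nat) : nat :=
  match i with O => m | S i' => h (stf h m i') end.

Section ML.
Variable X : BanachSpace.

Lemma VS_lin (u v : nat -> R) (z : nat -> X) al be K :
  VS X (fun n => vscal X (al * u n + be * v n) (z n)) K =
  vadd X (vscal X al (VS X (fun n => vscal X (u n) (z n)) K)) (vscal X be (VS X (fun n => vscal X (v n) (z n)) K)).
Proof.
  rewrite !VS_scal, <- VS_add. apply VS_ext. intros i _.
  rewrite vscal_distr_s, !vscal_assoc. auto.
Qed.

Lemma cm_le_cJ (z : nat -> X) s m c : is_cJ z s -> is_cm z m c -> c <= s.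
Proof. intros [H _] Hc. apply H. eauto. Qed.

Lemma cJ_le (z : nat -> X) s b : is_cJ z s -> (forall m c, is_cm z m c -> c <= b) -> s <= b.
Proof. intros [_ H] Hb. apply H. intros c [m Hm]. eauto. Qed.

Lemma cJ_nonneg (z : nat -> X) s : is_cJ z s -> 0 <= s.
Proof.
  intros H. destruct (cm_ex X z 0) as [c Hc]. pose proof (cm_bounds X z 0 c Hc).
  pose proof (cm_le_cJ z s 0 c H Hc). lra.
Qed.

Lemma cJ_ex (z : nat -> X) M : (forall n, vnorm X (z n) <= M) -> exists s, is_cJ z s /\ s <= M.
Proof.
  intros HM.
  destruct (completeness (fun c => exists m, is_cm z m c)) as [s Hs].
  - exists M. intros c [m Hm]. pose proof (cm_bounds X z m c Hm). specialize (HM m). lra.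
  - destruct (cm_ex X z 0) as [c Hc]. exists c, 0%nat; auto.
  - exists s. split; auto. apply (cJ_le z s M Hs). intros m c Hm.
    pose proof (cm_bounds X z m c Hm). specialize (HM m). lra.
Qed.

Lemma lub_unique E a b : is_lub E a -> is_lub E b -> a = b.
Proof. intros [A1 A2] [B1 B2]. apply Rle_antisym; auto. Qed.

Definition SubFrom (j : nat) (w z : nat -> X) := exists th : nat -> nat,
  (forall n, (j <= n)%nat -> (th n < th (S n))%nat) /\ (forall n, (j <= n)%nat -> (n <= th n)%nat) /\
  (forall n, (j <= n)%nat -> w n = z (th n)).

Lemma cJ_sub j (w z : nat -> X) s s' : SubFrom j w z -> is_cJ w s -> is_cJ z s' -> s' <= s.
Proof.
  intros [th [H1 [H2 H3]]] Hw Hz. apply (cJ_le z s' s Hz). intros m c Hc.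
  set (m1 := Nat.max m j).
  destruct (cm_ex X z (th m1)) as [c1 Hc1].
  destruct (cm_ex X w m1) as [c2 Hc2].
  pose proof (cm_mono X z m (th m1) c c1 ltac:(specialize (H2 m1 ltac:(lia)); lia) Hc Hc1).
  pose proof (cm_sub X w z th j m1 c2 c1 H1 H3 ltac:(lia) Hc2 Hc1).
  pose proof (cm_le_cJ w s m1 c2 Hw Hc2). lra.
Qed.

Definition suppin (a : nat -> R) N K := forall n, a n <> 0 -> (N <= n < K)%nat.

Lemma suppin_zero a N K n : suppin a N K -> ~ (N <= n < K)%nat -> a n = 0.
Proof. intros H Hn. apply NNPP. intros Ha. apply Hn; auto. Qed.

Lemma RS_supp_extend (a : nat -> R) (f : nat -> R -> R) N K K' : suppin a N K -> (K <= K')%nat ->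
  (forall n, f n 0 = 0) -> RS (fun n => f n (a n)) K' = RS (fun n => f n (a n)) K.
Proof.
  intros Hs HK Hf. apply RS_extend; auto. intros i Hi. rewrite (suppin_zero a N K i Hs) by lia. auto.
Qed.

Lemma VS_supp_extend (a : nat -> R) (z : nat -> X) N K K' : suppin a N K -> (K <= K')%nat ->
  VS X (fun n => vscal X (a n) (z n)) K' = VS X (fun n => vscal X (a n) (z n)) K.
Proof.
  intros Hs HK. apply VS_extend; auto. intros i Hi. rewrite (suppin_zero a N K i Hs) by lia. apply vscal0.
Qed.

Lemma ML (w y : nat -> X) s m c : is_cJ w s -> weakly_Cauchy y -> is_cm (seq_add w y) m c -> c <= s.
Proof.
  intros Hw Hy Hc. apply Rnot_lt_le. intros Hlt.
  set (d := (c - s) / 3).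
  assert (Hd : 0 < d) by (unfold d; lra).
  assert (S1 : forall N, exists a K, suppin a N K /\ RS (fun n => Rabs (a n)) K = 1 /\
              vnorm X (VS X (fun n => vscal X (a n) (w n)) K) < s + d).
  { intros N. destruct (cm_ex X w N) as [cN HcN]. pose proof (cm_le_cJ w s N cN Hw HcN).
    apply NNPP. intros Hn. assert (s + d <= cN).
    { apply (glb_ge _ _ _ HcN). intros r Hr. apply cm_set_iff in Hr. destruct Hr as [a [K [Hs [H1 ->]]]].
      apply Rnot_lt_le. intros Hl. apply Hn. exists a, K. auto. }
    lra. }
  assert (S2 : forall N, exists p : (nat -> R) * nat, let (b, K) := p in
            suppin b N K /\ RS (fun n => Rabs (b n)) K = 1 /\ RS b K = 0 /\
            vnorm X (VS X (fun n => vscal X (b n) (w n)) K) < s + d).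
  { intros N. destruct (S1 N) as [a1 [K1 [Hs1 [H11 H12]]]].
    destruct (S1 K1) as [a2 [K2 [Hs2 [H21 H22]]]].
    pose proof (supp_lt a1 N K1 Hs1 H11). pose proof (supp_lt a2 K1 K2 Hs2 H21).
    set (s1 := RS a1 K1). set (s2 := RS a2 K2).
    destruct (Req_dec s1 0) as [E1|E1].
    { exists (a1, K1). auto. }
    set (D := Rabs s1 + Rabs s2).
    assert (HD : 0 < D) by (unfold D; pose proof (Rabs_pos s2); pose proof (Rabs_pos_lt s1 E1); lra).
    assert (Hdisj : forall n, a1 n = 0 \/ a2 n = 0).
    { intros n. destruct (Req_dec (a1 n) 0); auto. right. apply (suppin_zero a2 K1 K2); auto.
      specialize (Hs1 n H1). lia. }
    exists (fun n => (s2 / D) * a1 n + (- s1 / D) * a2 n, K2). split; [|split; [|split]].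
    - intros n Hn. destruct (Hdisj n) as [E|E]; rewrite E in Hn.
      + assert (a2 n <> 0) by (intros E'; rewrite E' in Hn; lra). specialize (Hs2 n H1). lia.
      + assert (a1 n <> 0) by (intros E'; rewrite E' in Hn; lra). specialize (Hs1 n H1). lia.
    - transitivity (RS (fun n => (Rabs s2 / D) * Rabs (a1 n) + (Rabs s1 / D) * Rabs (a2 n)) K2).
      { apply RS_ext. intros n _. destruct (Hdisj n) as [E|E]; rewrite E, ?Rabs_R0.
        - rewrite Rmult_0_r, Rplus_0_l, Rmult_0_r, Rplus_0_l, Rabs_mult. f_equal.
          unfold Rdiv. rewrite Rabs_mult, Rabs_Ropp, (Rabs_inv D), (Rabs_pos_eq D); lra.
        - rewrite Rmult_0_r, Rplus_0_r, Rmult_0_r, Rplus_0_r, Rabs_mult. f_equal.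
          unfold Rdiv. rewrite Rabs_mult, (Rabs_inv D), (Rabs_pos_eq D); lra. }
      rewrite RS_lin, H21. rewrite (RS_supp_extend a1 (fun _ x => Rabs x) N K1 K2) by (auto; try lia; intros; apply Rabs_R0).
      rewrite H11. unfold D in *. field. lra.
    - rewrite RS_lin. replace (RS a1 K2) with s1.
      fold s2. field. lra. unfold s1. symmetry. apply RS_extend. lia. intros i Hi. apply (suppin_zero a1 N K1); auto; lia.
    - rewrite VS_lin. rewrite (VS_supp_extend a1 w N K1 K2) by (auto; lia).
      eapply Rle_lt_trans. apply vnorm_triangle. rewrite !vnorm_scal.
      assert (A3 : Rabs (s2 / D) = Rabs s2 / D).
      { unfold Rdiv. rewrite Rabs_mult, (Rabs_inv D), (Rabs_pos_eq D); lra. }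
      assert (A4 : Rabs (- s1 / D) = Rabs s1 / D).
      { unfold Rdiv. rewrite Rabs_mult, Rabs_Ropp, (Rabs_inv D), (Rabs_pos_eq D); lra. }
      rewrite A3, A4.
      assert (0 <= Rabs s2 / D) by (apply Rmult_le_pos; [apply Rabs_pos|left; apply Rinv_0_lt_compat; lra]).
      assert (0 < Rabs s1 / D) by (apply Rmult_lt_0_compat; [apply Rabs_pos_lt; auto|apply Rinv_0_lt_compat; lra]).
      apply Rle_lt_trans with (Rabs s2 / D * (s + d) + Rabs s1 / D * vnorm X (VS X (fun n => vscal X (a2 n) (w n)) K2)).
      { apply Rplus_le_compat_r. apply Rmult_le_compat_l; lra. }
      apply Rlt_le_trans with (Rabs s2 / D * (s + d) + Rabs s1 / D * (s + d)).
      { apply Rplus_lt_compat_l. apply Rmult_lt_compat_l; lra. }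
      right. unfold D in *. field. lra. }
  pose (g := fun N => proj1_sig (constructive_indefinite_description _ (S2 N))).
  assert (Hg : forall N, let (b, K) := g N in
            suppin b N K /\ RS (fun n => Rabs (b n)) K = 1 /\ RS b K = 0 /\
            vnorm X (VS X (fun n => vscal X (b n) (w n)) K) < s + d).
  { intros N. unfold g. destruct (constructive_indefinite_description _ _); auto. }
  pose (st := stf (fun N => snd (g N)) m).
  pose (b := fun i => fst (g (st i))).
  assert (Hb : forall i, suppin (b i) (st i) (st (S i)) /\ RS (fun n => Rabs (b i n)) (st (S i)) = 1 /\
      RS (b i) (st (S i)) = 0 /\ vnorm X (VS X (fun n => vscal X (b i n) (w n)) (st (S i))) < s + d).
  { intros i. specialize (Hg (st i)). unfold b. change (st (S i)) with (snd (g (st i))).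
    destruct (g (st i)); auto. }
  assert (Hst : forall i, (st i < st (S i))%nat).
  { intros i. destruct (Hb i) as [H1 [H2 _]]. eapply supp_lt; eauto. }
  assert (Hst0 : st 0%nat = m) by reflexivity.
  assert (Hstm : forall i i', (i < i')%nat -> (st (S i) <= st i')%nat).
  { intros i i' H. induction H. lia. specialize (Hst m0). lia. }
  assert (Hstge : forall i, (m + i <= st i)%nat).
  { induction i. simpl; lia. specialize (Hst i). lia. }
  pose (G := fun i => VS X (fun n => vscal X (b i n) (y n)) (st (S i))).
  assert (S4 : forall f, bounded_linear_functional f -> forall eps, 0 < eps ->
     exists I, forall i, (I <= i)%nat -> Rabs (f (G i)) <= eps).
  { intros f Hf eps Heps. destruct (Hy f Hf eps Heps) as [N HN]. exists N. intros i Hi.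
    destruct (Hb i) as [Hs [H1 [H0 _]]].
    unfold G. rewrite blf_VS; auto.
    destruct Hf as [Hfa [Hfs Hfb]].
    transitivity (Rabs (RS (fun n => b i n * (f (y n) - f (y N))) (st (S i)))).
    { right. f_equal.
      transitivity (RS (fun n => 1 * (b i n * (f (y n) - f (y N))) + f (y N) * b i n) (st (S i))).
      { apply RS_ext. intros n _. rewrite Hfs. ring. }
      rewrite RS_lin, H0. ring. }
    eapply Rle_trans. apply RS_abs.
    apply Rle_trans with (RS (fun n => eps * Rabs (b i n)) (st (S i))).
    { apply RS_le. intros n Hn. rewrite Rabs_mult.
      destruct (Req_dec (b i n) 0) as [E|E].
      - rewrite E, Rabs_R0. lra.
      - specialize (Hs n E). specialize (Hstge i).
        pose proof (HN n N ltac:(lia) ltac:(lia)). unfold R_dist in H.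
        rewrite (Rmult_comm eps). apply Rmult_le_compat_l. apply Rabs_pos. lra. }
    rewrite <- RS_scal, H1. lra. }
  assert (S5 : exists mu L, (forall i, 0 <= mu i) /\ RS mu L = 1 /\
     vnorm X (VS X (fun i => vscal X (mu i) (G i)) L) <= d).
  { apply NNPP. intros Hn.
    destruct (separation X G d Hd) as [f [Hf Hfd]].
    - intros mu L Hmu. destruct (Req_dec (RS mu L) 0) as [E|E].
      + rewrite E, Rmult_0_r. apply vnorm_nonneg.
      + assert (Ht : 0 < RS mu L) by (pose proof (RS_nonneg mu L ltac:(intros; apply Hmu)); lra).
        set (t := RS mu L) in *.
        assert (Hgt : d < vnorm X (VS X (fun i => vscal X (mu i / t) (G i)) L)).
        { apply Rnot_le_lt. intros Hle. apply Hn. exists (fun i => mu i / t), L. split; [|split]; auto.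
          - intros i. specialize (Hmu i). unfold Rdiv. apply Rmult_le_pos; [lra|left; apply Rinv_0_lt_compat; lra].
          - transitivity (/ t * RS mu L). rewrite RS_scal. apply RS_ext. intros; unfold Rdiv; ring.
            fold t. field. lra. }
        assert (E2 : VS X (fun i => vscal X (mu i) (G i)) L = vscal X t (VS X (fun i => vscal X (mu i / t) (G i)) L)).
        { rewrite VS_scal. apply VS_ext. intros i _. rewrite vscal_assoc. f_equal. field. lra. }
        rewrite E2, vnorm_scal, Rabs_pos_eq by lra.
        rewrite Rmult_comm. apply Rmult_le_compat_l; lra.
    - destruct (S4 f Hf (d / 2) ltac:(lra)) as [I HI]. specialize (HI I (le_n _)). specialize (Hfd I).
      pose proof (Rle_abs (f (G I))). lra. }
  destruct S5 as [mu [L [Hmu [Hmu1 HmuG]]]].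
  assert (HiL : forall i, (i < L)%nat -> (st (S i) <= st L)%nat).
  { intros i Hi. destruct (Nat.eq_dec (S i) L) as [E|Hne]. rewrite E; lia. apply Hstm; lia. }
  pose (cf := fun n => RS (fun i => mu i * b i n) L).
  assert (Hdisj : forall n i i', i <> i' -> b i n = 0 \/ b i' n = 0).
  { intros n i i' Hii. destruct (Req_dec (b i n) 0) as [E|E]; auto. right.
    destruct (Req_dec (b i' n) 0) as [E'|E']; auto. exfalso.
    destruct (Hb i) as [Hs _]. destruct (Hb i') as [Hs' _].
    specialize (Hs n E). specialize (Hs' n E').
    destruct (Nat.lt_ge_cases i i') as [Hl|Hl].
    - specialize (Hstm i i' Hl). lia.
    - assert (i' < i)%nat by lia. specialize (Hstm i' i H). lia. }
  assert (Hcm : cm_set (seq_add w y) m (vnorm X (VS X (fun n => vscal X (cf n) (seq_add w y n)) (st L)))).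
  { apply cm_set_iff. exists cf, (st L). split; [|split]; auto.
    - intros n Hn. destruct (classic (exists i, (i < L)%nat /\ b i n <> 0)) as [[i [Hi Hbi]]|Hno].
      + destruct (Hb i) as [Hs _]. specialize (Hs n Hbi).
        destruct (Nat.eq_dec (S i) L) as [<-|Hne].
        * specialize (Hstge i). lia.
        * specialize (Hstm i L ltac:(lia)). specialize (Hstge i). lia.
      + exfalso. apply Hn. unfold cf. apply RS_zero. intros i Hi.
        destruct (Req_dec (b i n) 0) as [E|E]. rewrite E; ring. exfalso; eauto.
    - transitivity (RS (fun n => RS (fun i => mu i * Rabs (b i n)) L) (st L)).
      { apply RS_ext. intros n _. unfold cf. rewrite RS_abs_single.
        - apply RS_ext. intros i _. rewrite Rabs_mult, (Rabs_pos_eq (mu i)); auto.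
        - intros i i' _ _ Hii. destruct (Hdisj n i i' Hii) as [E|E]; rewrite E; [left|right]; ring. }
      rewrite <- RS_swap. rewrite <- Hmu1. apply RS_ext. intros i Hi.
      rewrite <- RS_scal. destruct (Hb i) as [Hs [H1 _]].
      rewrite (RS_supp_extend (b i) (fun _ x => Rabs x) (st i) (st (S i)) (st L));
        [rewrite H1; ring | auto | apply HiL; auto | intros; apply Rabs_R0]. }
  pose proof (glb_le _ _ _ Hc Hcm) as Hcle.
  assert (Hvec : VS X (fun n => vscal X (cf n) (seq_add w y n)) (st L) =
     vadd X (VS X (fun i => vscal X (mu i) (VS X (fun n => vscal X (b i n) (w n)) (st (S i)))) L)
            (VS X (fun i => vscal X (mu i) (G i)) L)).
  { rewrite <- VS_add.
    transitivity (VS X (fun n => VS X (fun i => vscal X (mu i * b i n) (seq_add w y n)) L) (st L)).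
    { apply VS_ext. intros n _. unfold cf. apply VS_scal_sum. }
    rewrite VS_swap. apply VS_ext. intros i Hi.
    rewrite <- vscal_distr_v. unfold G. rewrite <- VS_add, VS_scal.
    destruct (Hb i) as [Hs _].
    rewrite (VS_extend X _ (st (S i)) (st L)); [| apply HiL; auto |].
    - apply VS_ext. intros n _. unfold seq_add. rewrite !vscal_distr_v, !vscal_assoc. auto.
    - intros n Hn. rewrite (suppin_zero (b i) (st i) (st (S i)) n Hs) by lia. rewrite Rmult_0_r. apply vscal0. }
  rewrite Hvec in Hcle.
  pose proof (vnorm_triangle X (VS X (fun i => vscal X (mu i) (VS X (fun n => vscal X (b i n) (w n)) (st (S i)))) L)
            (VS X (fun i => vscal X (mu i) (G i)) L)) as Htri.
  pose proof (VS_norm X (fun i => vscal X (mu i) (VS X (fun n => vscal X (b i n) (w n)) (st (S i)))) L) as Hn1.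
  assert (Hn2 : RS (fun i => vnorm X (vscal X (mu i) (VS X (fun n => vscal X (b i n) (w n)) (st (S i))))) L <= s + d).
  { apply Rle_trans with (RS (fun i => (s + d) * mu i) L).
    - apply RS_le. intros i _. rewrite vnorm_scal, Rabs_pos_eq by auto. rewrite Rmult_comm.
      apply Rmult_le_compat_r; auto. destruct (Hb i) as [_ [_ [_ H]]]. lra.
    - rewrite <- RS_scal, Hmu1. lra. }
  unfold d in *. lra.
Qed.
End ML.

Fixpoint Thf (sf : nat -> (nat -> nat) -> (nat -> nat)) (k : nat) : nat -> nat :=
  match k with O => fun n => n | S k' => fun n => Thf sf k' (sf k' (Thf sf k') n) end.

Fixpoint Rf (sf : nat -> (nat -> nat) -> (nat -> nat)) (j l : nat) : nat -> nat :=
  match l with O => fun n => n | S l' => fun n => Rf sf j l' (sf (j + l')%nat (Thf sf (j + l')) n) end.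

Lemma sinc_mono (f : nat -> nat) : strictly_increasing f -> forall a b, (a < b)%nat -> (f a < f b)%nat.
Proof. intros H a b Hab. induction Hab. apply H. specialize (H m). lia. Qed.

Lemma sinc_ge (f : nat -> nat) : strictly_increasing f -> forall n, (n <= f n)%nat.
Proof. intros H n. induction n. lia. specialize (H n). lia. Qed.

Lemma sinc_comp (f g : nat -> nat) : strictly_increasing f -> strictly_increasing g ->
  strictly_increasing (fun n => f (g n)).
Proof. intros Hf Hg n. apply sinc_mono; auto. Qed.

Lemma is_lub_ext (E1 E2 : R -> Prop) a : (forall c, E1 c <-> E2 c) -> is_lub E1 a -> is_lub E2 a.
Proof.
  intros H [H1 H2]. split.
  - intros c Hc. apply H1, H, Hc.
  - intros b Hb. apply H2. intros c Hc. apply Hb, H, Hc.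
Qed.

Section Main.
Variable X : BanachSpace.

Lemma wC_opp (y : nat -> X) : weakly_Cauchy y -> weakly_Cauchy (fun n => vopp X (y n)).
Proof.
  intros Hy f Hf eps Heps. destruct (Hy f Hf eps Heps) as [N HN]. exists N. intros n m Hn Hm.
  rewrite !(blf_opp X f Hf). unfold Rdist in *. specialize (HN n m Hn Hm).
  replace (- f (y n) - - f (y m)) with (- (f (y n) - f (y m))) by ring. rewrite Rabs_Ropp. auto.
Qed.

Lemma wC_sub (y : nat -> X) psi : weakly_Cauchy y -> strictly_increasing psi -> weakly_Cauchy (fun n => y (psi n)).
Proof.
  intros Hy Hp f Hf eps Heps. destruct (Hy f Hf eps Heps) as [N HN]. exists N. intros n m Hn Hm.
  apply HN; pose proof (sinc_ge psi Hp n); pose proof (sinc_ge psi Hp m); lia.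
Qed.

Lemma ME (w y : nat -> X) s : is_cJ w s -> weakly_Cauchy y -> is_cJ (seq_add w y) s.
Proof.
  intros Hw Hy.
  destruct (completeness (fun c => exists m, is_cm (seq_add w y) m c)) as [s' Hs'].
  - exists s. intros c [m Hm]. apply (ML X w y s m c Hw Hy Hm).
  - destruct (cm_ex X (seq_add w y) 0) as [c Hc]. exists c, 0%nat; auto.
  - assert (E : s = s').
    { apply Rle_antisym.
      - apply (cJ_le X w s s' Hw). intros m c Hc.
        assert (Hw' : seq_add (seq_add w y) (fun n => vopp X (y n)) = w).
        { apply functional_extensionality. intros n. unfold seq_add.
          rewrite <- vadd_assoc, vadd_opp, vadd_0. auto. }
        rewrite <- Hw' in Hc. apply (ML X (seq_add w y) (fun n => vopp X (y n)) s' m c Hs' (wC_opp y Hy) Hc).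
      - apply (cJ_le X (seq_add w y) s' s Hs'). intros m c Hc. apply (ML X w y s m c Hw Hy Hc). }
    rewrite E; auto.
Qed.

Definition bnd (z : nat -> X) M := forall n, vnorm X (z n) <= M.

Lemma tcJ_ex (z : nat -> X) M : bnd z M -> exists t, is_tilde_cJ z t.
Proof.
  intros HM. destruct (completeness (fun c => exists phi, strictly_increasing phi /\ is_cJ (fun k => z (phi k)) c)) as [t Ht].
  - exists M. intros c [phi [Hp Hc]]. destruct (cJ_ex X (fun k => z (phi k)) M) as [s [Hs HsM]].
    intros n; apply HM. rewrite (lub_unique _ c s Hc Hs); auto.
  - destruct (cJ_ex X z M HM) as [s [Hs _]]. exists s, (fun n => n). split; auto. intros n; lia.
  - exists t; auto.
Qed.

Lemma cJ_le_tcJ (z : nat -> X) s t : is_cJ z s -> is_tilde_cJ z t -> s <= t.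
Proof. intros Hs [Ht _]. apply Ht. exists (fun n => n). split; auto. intros n; lia. Qed.

Lemma tcJ_sub j (w z : nat -> X) M T T' : bnd z M -> SubFrom X j w z ->
  is_tilde_cJ w T -> is_tilde_cJ z T' -> T <= T'.
Proof.
  intros HM [th [H1 [H2 H3]]] HT HT'. destruct HT as [_ HT]. apply HT.
  intros c [psi [Hpsi Hc]].
  pose (chi := fun n => if (n <? j)%nat then n else th (psi n)).
  assert (Hchi : strictly_increasing chi).
  { intros n. unfold chi. destruct (n <? j)%nat eqn:E1; destruct (S n <? j)%nat eqn:E2.
    - lia.
    - apply Nat.ltb_lt in E1. apply Nat.ltb_ge in E2. assert (n + 1 = j)%nat by lia.
      pose proof (sinc_ge psi Hpsi (S n)). pose proof (H2 (psi (S n)) ltac:(lia)). lia.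
    - apply Nat.ltb_ge in E1. apply Nat.ltb_lt in E2. lia.
    - apply Nat.ltb_ge in E1. apply (mono_from th j H1). pose proof (sinc_ge psi Hpsi n); lia. apply Hpsi. }
  destruct (cJ_ex X (fun k => z (chi k)) M) as [c2 [Hc2 _]]. intros n; apply HM.
  apply Rle_trans with c2.
  - apply (cJ_sub X j (fun k => z (chi k)) (fun k => w (psi k)) c2 c); auto.
    exists (fun n => n). split; [intros; lia|split; [intros; lia|]].
    intros n Hn. unfold chi. replace (n <? j)%nat with false by (symmetry; apply Nat.ltb_ge; lia).
    rewrite H3; auto. pose proof (sinc_ge psi Hpsi n); lia.
  - destruct HT' as [HT' _]. apply HT'. exists chi; auto.
Qed.

Section Diag.
Variable x : nat -> X.
Variable M : R.
Hypothesis HM : bnd x M.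
Variable d0 : R.
Hypothesis Hd0 : 0 < d0.

Definition epsk (k : nat) := d0 / INR (S k).

Lemma bnd_sub phi : bnd (fun n => x (phi n)) M.
Proof. intros n; apply HM. Qed.

Lemma step_ex : forall k (th : nat -> nat), exists psi : nat -> nat, strictly_increasing th ->
  strictly_increasing psi /\ forall T c, is_tilde_cJ (fun n => x (th n)) T ->
     is_cJ (fun n => x (th (psi n))) c -> T - epsk k < c.
Proof.
  intros k th. destruct (classic (strictly_increasing th)) as [Hth|Hth].
  2:{ exists (fun n => n). intros; contradiction. }
  destruct (tcJ_ex (fun n => x (th n)) M (bnd_sub th)) as [T HT].
  assert (He : 0 < epsk k) by (unfold epsk; apply Rdiv_lt_0_compat; auto; apply lt_0_INR; lia).
  assert (exists c, (exists psi, strictly_increasing psi /\ is_cJ (fun n => x (th (psi n))) c) /\ T - epsk k < c).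
  { apply NNPP. intros Hn. destruct HT as [_ HT2].
    assert (T <= T - epsk k). { apply HT2. intros c Hc. apply Rnot_lt_le. intros Hl. apply Hn. eauto. } lra. }
  destruct H as [c [[psi [Hpsi Hc]] Hlt]]. exists psi. intros _. split; auto.
  intros T' c' HT' Hc'. rewrite (lub_unique _ T' T HT' HT), (lub_unique _ c' c Hc' Hc). auto.
Qed.

Definition sf : nat -> (nat -> nat) -> (nat -> nat) :=
  fun k th => proj1_sig (constructive_indefinite_description _ (step_ex k th)).

Lemma sf_spec k th : strictly_increasing th -> strictly_increasing (sf k th) /\
  forall T c, is_tilde_cJ (fun n => x (th n)) T -> is_cJ (fun n => x (th (sf k th n))) c -> T - epsk k < c.
Proof. unfold sf. destruct (constructive_indefinite_description _ _); auto. Qed.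

Lemma Th_sinc k : strictly_increasing (Thf sf k).
Proof.
  induction k. intros n; simpl; lia.
  simpl. apply sinc_comp; auto. apply sf_spec; auto.
Qed.

Lemma psi_sinc k : strictly_increasing (sf k (Thf sf k)).
Proof. apply sf_spec, Th_sinc. Qed.

Lemma Rf_sinc j l : strictly_increasing (Rf sf j l).
Proof.
  induction l. intros n; simpl; lia.
  simpl. apply sinc_comp; auto. apply psi_sinc.
Qed.

Lemma Th_Rf j l n : Thf sf (j + l) n = Thf sf j (Rf sf j l n).
Proof.
  revert n. induction l; intros n. simpl. rewrite Nat.add_0_r. auto.
  rewrite Nat.add_succ_r. simpl. rewrite IHl. auto.
Qed.

Definition Phi n := Thf sf (S n) n.

Lemma Phi_sinc : strictly_increasing Phi.
Proof.
  intros n. unfold Phi. change (Thf sf (S (S n)) (S n)) with (Thf sf (S n) (sf (S n) (Thf sf (S n)) (S n))).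
  apply sinc_mono. apply Th_sinc. pose proof (sinc_ge _ (psi_sinc (S n)) (S n)). lia.
Qed.

Lemma Phi_sub j : SubFrom X j (fun n => x (Phi n)) (fun n => x (Thf sf j n)).
Proof.
  exists (fun n => Rf sf j (S n - j) n). split; [|split].
  - intros n Hn. replace (S (S n) - j)%nat with (S (S n - j)) by lia. cbn [Rf].
    apply sinc_mono. apply Rf_sinc. pose proof (sinc_ge _ (psi_sinc (j + (S n - j))) (S n)). lia.
  - intros n Hn. apply sinc_ge, Rf_sinc.
  - intros n Hn. unfold Phi. rewrite <- Th_Rf. f_equal. f_equal. lia.
Qed.

Lemma diag : exists a, is_cJ (fun n => x (Phi n)) a /\ is_tilde_cJ (fun n => x (Phi n)) a /\
  forall t, is_tilde_cJ x t -> t - d0 < a.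
Proof.
  destruct (cJ_ex X (fun n => x (Phi n)) M (bnd_sub Phi)) as [a [Ha _]].
  destruct (tcJ_ex (fun n => x (Phi n)) M (bnd_sub Phi)) as [T HT].
  assert (Hlow : forall j, forall Tj, is_tilde_cJ (fun n => x (Thf sf j n)) Tj -> Tj - epsk j < a).
  { intros j Tj HTj.
    destruct (cJ_ex X (fun n => x (Thf sf (S j) n)) M (bnd_sub _)) as [cj [Hcj _]].
    pose proof (proj2 (sf_spec j _ (Th_sinc j)) Tj cj HTj Hcj).
    pose proof (cJ_sub X (S j) _ _ a cj (Phi_sub (S j)) Ha Hcj). lra. }
  assert (HTa : T <= a).
  { apply Rnot_lt_le. intros Hl.
    destruct (archimed_cor1 ((T - a) / d0)) as [N [HN HN0]].
    { apply Rdiv_lt_0_compat; lra. }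
    destruct (tcJ_ex (fun n => x (Thf sf N n)) M (bnd_sub _)) as [TN HTN].
    pose proof (tcJ_sub N _ _ M T TN (bnd_sub _) (Phi_sub N) HT HTN).
    pose proof (Hlow N TN HTN).
    assert (epsk N < T - a).
    { unfold epsk. rewrite S_INR. assert (0 < INR N) by (apply lt_0_INR; lia).
      apply Rlt_trans with (d0 / INR N).
      - unfold Rdiv. apply Rmult_lt_compat_l; auto. apply Rinv_lt_contravar; nra.
      - apply Rmult_lt_reg_r with (/ d0). apply Rinv_0_lt_compat; auto.
        unfold Rdiv. rewrite Rmult_comm, <- Rmult_assoc, Rinv_l, Rmult_1_l by lra. lra. }
    lra. }
  exists a. split; auto. split.
  - replace a with T; auto. apply Rle_antisym; auto. eapply cJ_le_tcJ; eauto.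
  - intros t Ht. pose proof (Hlow 0%nat t Ht). unfold epsk in H. simpl in H.
    replace (d0 / 1) with d0 in H by field. lra.
Qed.
End Diag.
End Main.

Theorem lemma5p3 (X : BanachSpace) (x y : nat -> X)
  (hx : bounded_seq x) (hy : weakly_Cauchy y) (eps : R) (heps : 0 < eps < 1) :
  exists phi : nat -> nat, strictly_increasing phi /\
    cJ_stable (fun k => x (phi k)) /\
    cJ_stable (seq_add (fun k => x (phi k)) (fun k => y (phi k))) /\
    (exists t a b : R,
       is_tilde_cJ x t /\
       is_cJ (fun k => x (phi k)) a /\
       is_cJ (seq_add (fun k => x (phi k)) (fun k => y (phi k))) b /\
       (1 - eps) * t <= a /\ a <= t /\ b = a).
Proof.
  destruct hx as [M HM].
  destruct (tcJ_ex X x M HM) as [t Ht].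
  assert (Ht0 : 0 <= t).
  { destruct (cJ_ex X x M HM) as [s [Hs _]]. pose proof (cJ_nonneg X x s Hs).
    pose proof (cJ_le_tcJ X x s t Hs Ht). lra. }
  assert (Hd0 : exists d0, 0 < d0 /\ forall a, t - d0 < a -> 0 <= a -> (1 - eps) * t <= a).
  { destruct (Req_dec t 0) as [E|E].
    - exists 1. split. lra. intros a _ Ha. rewrite E. lra.
    - exists (eps * t). split. apply Rmult_lt_0_compat; lra. intros a Ha _. lra. }
  destruct Hd0 as [d0 [Hd0 Hd0']].
  destruct (diag X x M HM d0 Hd0) as [a [Ha [HTa Hlow]]].
  set (Phi' := Phi X x M HM d0 Hd0) in *.
  assert (HPhi : strictly_increasing Phi') by apply Phi_sinc.
  assert (HS : is_cJ (seq_add (fun k => x (Phi' k)) (fun k => y (Phi' k))) a).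
  { apply ME; auto. apply wC_sub; auto. }
  exists Phi'. split; auto. split; [exists a; auto|]. split.
  - exists a. split; auto. revert HTa. apply is_lub_ext. intros c. split.
    + intros [psi [Hpsi Hc]]. exists psi. split; auto.
      apply (ME X (fun k => x (Phi' (psi k))) (fun k => y (Phi' (psi k))) c Hc).
      apply (wC_sub X y (fun k => Phi' (psi k))); auto. apply sinc_comp; auto.
    + intros [psi [Hpsi Hc]]. exists psi. split; auto.
      destruct (cJ_ex X (fun k => x (Phi' (psi k))) M) as [c' [Hc' _]]. intros n; apply HM.
      assert (Hc2 : is_cJ (fun k => seq_add (fun k0 => x (Phi' k0)) (fun k0 => y (Phi' k0)) (psi k)) c').
      { apply (ME X (fun k => x (Phi' (psi k))) (fun k => y (Phi' (psi k))) c' Hc').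
        apply (wC_sub X y (fun k => Phi' (psi k))); auto. apply sinc_comp; auto. }
      rewrite (lub_unique _ c c' Hc Hc2). auto.
  - exists t, a, a. split; auto. split; auto. split; auto. split; [|split; auto].
    + apply Hd0'. apply Hlow; auto. eapply cJ_nonneg; eauto.
    + destruct Ht as [Ht1 _]. apply Ht1. exists Phi'. split; auto.
Qed.
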